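(* Let $f:\mathbb{R}^n\to\mathbb{R}\cup\{+\infty\}$ be a polyhedral M-convex function with bounded $\operatorname{dom}_{\mathbb{R}} f$. Let $y\in\operatorname{dom}_{\mathbb{R}} f$ with $\phi_{\mathbb{R}}(y)<0$, let $i,j\in N$ be distinct with $f'_{\mathbb{R}}(y;i,j)=\phi_{\mathbb{R}}(y)$, and let $\lambda>0$ satisfy $f(y+\lambda(\chi_i-\chi_j))-f(y)=\lambda\phi_{\mathbb{R}}(y)$. Put $\hat y=y+\lambda(\chi_i-\chi_j)$. Then (i) $\phi_{\mathbb{R}}(\hat y)\ge\phi_{\mathbb{R}}(y)$; (ii) for all distinct $h,k\in N$, $f'_{\mathbb{R}}(\hat y;h,k)\ge\phi_{\mathbb{R}}(y)$, and if equality holds then $f'_{\mathbb{R}}(\hat y;h,k)=\phi_{\mathbb{R}}(\hat y)$ (i.e. $+\chi_h-\chi_k$ is a steepest descent direction at $\hat y$), $k\neq i$, and $h\neq j$.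
   Context: $N=\{1,\dots,n\}$; $\chi_i$ is the $i$-th unit vector. $\operatorname{dom}_{\mathbb{R}} f=\{x\in\mathbb{R}^n:f(x)<+\infty\}$. A polyhedral convex function $f:\mathbb{R}^n\to\mathbb{R}\cup\{+\infty\}$ (epigraph a polyhedron, $\operatorname{dom}_{\mathbb{R}} f\neq\emptyset$) is M-convex if for all $x,y\in\operatorname{dom}_{\mathbb{R}} f$ and every $i$ with $x(i)>y(i)$ there exist $j$ with $x(j)<y(j)$ and $\epsilon_0>0$ such that $f(x)+f(y)\ge f(x-\epsilon(\chi_i-\chi_j))+f(y+\epsilon(\chi_i-\chi_j))$ for all $\epsilon\in[0,\epsilon_0]$. For $x\in\operatorname{dom}_{\mathbb{R}} f$, $f'_{\mathbb{R}}(x;i,j)=\lim_{\alpha\downarrow0}(f(x+\alpha(\chi_i-\chi_j))-f(x))/\alpha$ (possibly $+\infty$), and $\phi_{\mathbb{R}}(x)=\min_{i,j\in N}f'_{\mathbb{R}}(x;i,j)$. *)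

(* Defs.v *)
From HB Require Import structures.
From mathcomp Require Import all_boot all_order all_algebra.
From mathcomp Require Import all_classical all_reals all_analysis.
Set Implicit Arguments. Unset Strict Implicit. Unset Printing Implicit Defensive.
Import Order.TTheory GRing.Theory Num.Theory.
Import numFieldNormedType.Exports.
Local Open Scope ring_scope.
Local Open Scope classical_set_scope.
Local Open Scope ereal_scope.

Definition chi (R : realType) (n : nat) (i : 'I_n) : 'rV[R]_n := delta_mx (0%R : 'I_1) i.

Definition in_dom (R : realType) (n : nat) (f : 'rV[R]_n -> \bar R) (x : 'rV[R]_n) : Prop :=
  f x < +oo.

(* f : R^n -> R ∪ {+oo} is polyhedral convex: f never takes -oo,
   dom f nonempty, and the epigraph {(x,t) | f x <= t} is a polyhedron,
   i.e. a finite intersection of closed half-spaces of R^(n+1). *)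
Definition polyhedral_convex (R : realType) (n : nat) (f : 'rV[R]_n -> \bar R) : Prop :=
  (forall x, f x != -oo) /\
  (exists x, in_dom f x) /\
  exists (m : nat) (A : 'M[R]_(m, n)) (a b : 'I_m -> R),
    forall (x : 'rV[R]_n) (t : R),
      f x <= t%:E <-> (forall k : 'I_m, (\sum_(l < n) A k l * x ord0 l + a k * t <= b k)%R).

Definition M_convex (R : realType) (n : nat) (f : 'rV[R]_n -> \bar R) : Prop :=
  forall x y : 'rV[R]_n, in_dom f x -> in_dom f y ->
  forall i : 'I_n, (y ord0 i < x ord0 i)%R ->
  exists j : 'I_n, (x ord0 j < y ord0 j)%R /\
    exists2 eps0 : R, (0 < eps0)%R &
      forall eps : R, (0 <= eps <= eps0)%R ->
        f (x - eps *: (chi R i - chi R j))%R + f (y + eps *: (chi R i - chi R j))%R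
          <= f x + f y.

Definition bounded_dom (R : realType) (n : nat) (f : 'rV[R]_n -> \bar R) : Prop :=
  exists M : R, forall x, in_dom f x -> forall l : 'I_n, (`|x ord0 l| <= M)%R.

Definition fder (R : realType) (n : nat) (f : 'rV[R]_n -> \bar R)
    (x : 'rV[R]_n) (i j : 'I_n) : \bar R :=
  lim ((fun alpha : R => (f (x + alpha *: (chi R i - chi R j))%R - f x) * (alpha^-1)%:E)
         @ (0 : R)^'+).

Definition phiR (R : realType) (n : nat) (f : 'rV[R]_n -> \bar R) (x : 'rV[R]_n) : \bar R :=
  \big[mine/+oo]_(i < n) \big[mine/+oo]_(j < n) fder f x i j.

(* Main.v *)
Require Import Defs.
From HB Require Import structures.
From mathcomp Require Import all_boot all_order all_algebra.
From mathcomp Require Import all_classical all_reals all_analysis.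
From mathcomp Require Import ring lra.
Import Order.TTheory GRing.Theory Num.Theory.
Import numFieldNormedType.Exports.
Set Implicit Arguments. Unset Strict Implicit. Unset Printing Implicit Defensive.
Local Open Scope classical_set_scope.
Local Open Scope ring_scope.

Section Aux.
Local Open Scope ereal_scope.
Variables (R : realType) (n : nat) (f : 'rV[R]_n -> \bar R).
Hypothesis hpoly : polyhedral_convex f.

Lemma f_neq_ninfty x : f x != -oo.
Proof. by case: hpoly. Qed.

Lemma dom_fin x : in_dom f x -> exists X : R, f x = X%:E.
Proof.
rewrite /in_dom; have := f_neq_ninfty x; case: (f x) => // X _ _; by exists X.
Qed.

Lemma f_convex p q (t P Q : R) : (0 <= t <= 1)%R -> f p = P%:E -> f q = Q%:E ->
  f (t *: p + (1 - t) *: q)%R <= (t * P + (1 - t) * Q)%R%:E.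
Proof.
move=> /andP[t0 t1] fp fq.
case: hpoly => _ [_ [m [A [a [b H]]]]].
apply/H => k.
have := (H p P).1; rewrite fp lexx => /(_ isT k) hp.
have := (H q Q).1; rewrite fq lexx => /(_ isT k) hq.
have -> : (\sum_(l < n) A k l * (t *: p + (1 - t) *: q) ord0 l =
   t * \sum_(l < n) A k l * p ord0 l + (1 - t) * \sum_(l < n) A k l * q ord0 l)%R.
  rewrite !mulr_sumr -big_split /=; apply: eq_bigr => l _; rewrite !mxE; ring.
move: hp hq.
set S1 := (\sum_(l < n) _ * p _ _)%R.
set S2 := (\sum_(l < n) _ * q _ _)%R.
move=> hp hq.
have h1 := mulr_ge0 t0 (ltW (ltr01 : (0 < 1 :> R)%R)).
nra.
Qed.

Lemma fcases x : (exists F, f x = F%:E) \/ f x = +oo.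
Proof.
have := f_neq_ninfty x; case: (f x) => [F _|_|//]; [left; exists F|right] => //.
Qed.

Definition qt (x u : 'rV[R]_n) (al : R) := (f (x + al *: u)%R - f x) * (al^-1)%:E.

Lemma qt_mono x u X (fx : f x = X%:E) (al et : R) : (0 < al)%R -> (al <= et)%R ->
  qt x u al <= qt x u et.
Proof.
move=> a0 ae; have e0 : (0 < et)%R := lt_le_trans a0 ae.
rewrite /qt fx.
have [[F fF]|fF] := fcases (x + et *: u)%R.
- have hxa : (x + al *: u = (al / et) *: (x + et *: u) + (1 - al / et) *: x)%R.
    apply/rowP => l; rewrite !mxE; field; exact: lt0r_neq0.
  have t01 : (0 <= al / et <= 1)%R.
    by apply/andP; split; [rewrite divr_ge0 // ltW | rewrite ler_pdivrMr // mul1r].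
  have := f_convex t01 fF fx; rewrite -hxa.
  have [[G fG]|->] := fcases (x + al *: u)%R.
  + rewrite fG fF lee_fin => hG.
    rewrite -!EFinB -!EFinM lee_fin.
    rewrite -(@ler_pM2l _ al) // mulrCA mulfV ?lt0r_neq0// mulr1.
    apply: (le_trans (y := (al / et * F + (1 - al / et) * X) - X)%R); first by lra.
    rewrite lerBlDr; apply: le_trans (lexx _) => //.
    have -> : (al * ((F - X) * et^-1) + X = al / et * F + (1 - al / et) * X)%R by ring.
    by [].
  + by rewrite leye_eq.
- by rewrite fF addye // gt0_mulye ?leey // lte_fin invr_gt0.
Qed.

Arguments qt_mono {x u X} fx {al et}.

Lemma qt_cvg x u X (fx : f x = X%:E) : cvg (qt x u @ (0:R)^'+).
Proof.
apply: cvgP; apply: (@nondecreasing_at_right_cvge _ _ _ (BInfty _ false)) => //.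
move=> a b; rewrite !in_itv /= !andbT => a0 b0 ab; have := qt_mono (u:=u) fx a0 ab; exact.
Qed.

Arguments qt_cvg {x u X} fx.

Lemma fder_le x a b X (fx : f x = X%:E) (et : R) : (0 < et)%R ->
  fder f x a b <= qt x (chi R a - chi R b)%R et.
Proof.
move=> e0; apply: lime_le; first exact: qt_cvg fx.
near=> al.
have al0 : (0 < al)%R by near: al; exact: nbhs_right_gt.
have ale : (al <= et)%R by near: al; exact: nbhs_right_le.
have := qt_mono (u := (chi R a - chi R b)%R) fx al0 ale; exact.
Unshelve. all: by end_near.
Qed.

Lemma fder_ge x a b X (fx : f x = X%:E) (c : \bar R) (dl : R) : (0 < dl)%R ->
  (forall al : R, (0 < al)%R -> (al <= dl)%R -> c <= qt x (chi R a - chi R b)%R al) ->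
  c <= fder f x a b.
Proof.
move=> d0 H; apply: lime_ge; first exact: qt_cvg fx.
near=> al.
apply: H; first by near: al; exact: nbhs_right_gt.
near: al; exact: nbhs_right_le.
Unshelve. all: by end_near.
Qed.

End Aux.

Definition N1 (R : realType) (n : nat) (v : 'rV[R]_n) : R := \sum_(l < n) `|v ord0 l|.

Lemma chiE (R : realType) n (a l : 'I_n) : chi R a ord0 l = (l == a)%:R.
Proof. by rewrite /chi mxE eqxx. Qed.

Lemma e1 (b : bool) : (((ord0 : 'I_1) == 0) && b) = b.
Proof. by []. Qed.

Lemma N1_ge0 (R : realType) n (v : 'rV[R]_n) : 0 <= N1 v.
Proof. by apply: sumr_ge0 => l _. Qed.

Lemma N1D (R : realType) n (p q : 'rV[R]_n) : N1 (p + q) <= N1 p + N1 q.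
Proof. rewrite /N1 -big_split /=; apply: ler_sum => l _; rewrite mxE; exact: ler_normD. Qed.

Lemma N1Z (R : realType) n (s : R) (p : 'rV[R]_n) : N1 (s *: p) = `|s| * N1 p.
Proof. rewrite /N1 mulr_sumr; apply: eq_bigr => l _; by rewrite mxE normrM. Qed.

Lemma N1_0 (R : realType) n : N1 (0 : 'rV[R]_n) = 0.
Proof. rewrite /N1 big1 // => l _; by rewrite mxE normr0. Qed.

Lemma sum_delta (R : realType) n (a : 'I_n) : \sum_(l < n) ((l == a)%:R : R) = 1.
Proof.
rewrite (bigD1 a) //= eqxx big1 ?addr0 // => l /negbTE ->; by [].
Qed.

Lemma N1_chi (R : realType) n (a b : 'I_n) : N1 (chi R a - chi R b) <= 2.
Proof.
rewrite /N1 (@le_trans _ _ (\sum_(l < n) ((l == a)%:R + (l == b)%:R)))//.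
  apply: ler_sum => l _; rewrite !mxE !e1.
  by apply: le_trans (ler_normB _ _) _; rewrite !normr_nat.
by rewrite big_split /= !sum_delta.
Qed.

Lemma N1_step (R : realType) n (x : 'rV[R]_n) (a b : 'I_n) (et : R) :
  a != b -> 0 <= et -> et <= x ord0 a -> et <= - x ord0 b ->
  N1 (x - et *: (chi R a - chi R b)) = N1 x - 2 * et.
Proof.
move=> ab e0 ha hb.
rewrite /N1 (bigD1 a) //= [in RHS](bigD1 a) //= (bigD1 b) 1?eq_sym //= [in RHS](bigD1 b) 1?eq_sym //=.
rewrite !mxE !e1 eqxx (negbTE ab) eq_sym (negbTE ab) eqxx /=.
have -> : \sum_(i < n | (i != a) && (i != b)) `|(x - et *: (chi R a - chi R b)) ord0 i| =
          \sum_(i < n | (i != a) && (i != b)) `|x ord0 i|.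
  apply: eq_bigr => l /andP[la lb]; by rewrite !mxE !e1 (negbTE la) (negbTE lb) subrr mulr0 subr0.
have -> : `|x ord0 a - et * (1 - 0)| = x ord0 a - et by rewrite subr0 mulr1 ger0_norm // subr_ge0.
have -> : `|x ord0 a| = x ord0 a by rewrite ger0_norm //; lra.
have -> : `|x ord0 b - et * (0 - 1)| = - x ord0 b - et by rewrite ler0_norm; lra.
have -> : `|x ord0 b| = - x ord0 b by rewrite ler0_norm //; lra.
lra.
Qed.

Lemma cont_sum (T : topologicalType) (R : realType) (I : Type) (s : seq I) (F : I -> T -> R) :
  (forall l, continuous (F l)) -> continuous (fun v => \sum_(l <- s) F l v).
Proof.
move=> Fc; elim: s => [|a s IH].
  rewrite (_ : (fun v => _) = fun=> 0); first exact: cst_continuous.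
  by apply/funext => v; rewrite big_nil.
rewrite (_ : (fun v => _) = (fun v => F a v + \sum_(l <- s) F l v)); last first.
  by apply/funext => v; rewrite big_cons.
move=> x; apply: continuousD; [exact: Fc | exact: IH].
Qed.

Lemma N1_cont (R : realType) n (y : 'rV[R]_n) : continuous (fun v : 'rV[R]_n => N1 (v - y)).
Proof.
rewrite /N1; apply: cont_sum => l.
rewrite (_ : (fun v : 'rV[R]_n => `|(v - y) ord0 l|) = fun v => `|v ord0 l - y ord0 l|); last first.
  by apply/funext => v; rewrite !mxE.
move=> x.
have h1 : (fun v : 'rV[R]_n => v ord0 l) @ x --> x ord0 l := @coord_continuous _ _ _ ord0 l x.
have h2 : (fun=> y ord0 l) @ x --> y ord0 l by exact: (@cst_continuous _ _ (y ord0 l) x).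
have h3 := @cvgB _ _ _ _ (nbhs_filter x) _ _ _ _ h1 h2.
have h4 := @cvg_norm _ _ _ _ (nbhs_filter x) _ _ h3.
exact: h4.
Qed.

Lemma contD (T : topologicalType) (R : realType) (g h : T -> R) :
  continuous g -> continuous h -> continuous (fun v => g v + h v).
Proof. by move=> gc hc x; apply: continuousD; [exact: gc | exact: hc]. Qed.

Lemma contMl (T : topologicalType) (R : realType) (k : R) (g : T -> R) :
  continuous g -> continuous (fun v => k * g v).
Proof. by move=> gc x; apply: continuousM; [exact: cst_continuous | exact: gc]. Qed.

Lemma contMr (T : topologicalType) (R : realType) (k : R) (g : T -> R) :
  continuous g -> continuous (fun v => g v * k).
Proof. by move=> gc x; apply: continuousM; [exact: gc | exact: cst_continuous]. Qed.

Section Main.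
Variables (R : realType) (n : nat) (f : 'rV[R]_n -> \bar R).
Hypotheses (hpoly : polyhedral_convex f) (hM : M_convex f) (hbd : bounded_dom f).
Variables (y : 'rV[R]_n) (Y d : R).
Hypotheses (fy : f y = Y%:E) (hphi : phiR f y = d%:E) (d0 : (d <= 0)%R).

Local Open Scope ereal_scope.

Lemma phi_le x a b : phiR f x <= fder f x a b.
Proof. by rewrite /phiR (bigD1 a) //= (bigD1 b) //= !ge_min lexx. Qed.

Lemma line_bound a b (et : R) : (0 < et)%R ->
  (Y + et * d)%R%:E <= f (y + et *: (chi R a - chi R b))%R.
Proof.
move=> e0.
have := le_trans (phi_le y a b) (fder_le hpoly a b fy e0).
rewrite hphi /qt fy.
have [[F fF]|->] := fcases hpoly (y + et *: (chi R a - chi R b))%R.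
- rewrite fF -EFinB -EFinM !lee_fin => h.
  rewrite ler_pdivlMr // in h; lra.
- by rewrite leey.
Qed.

Lemma G w : in_dom f w -> (Y + d * N1 (w - y) / 2)%R%:E <= f w.
Proof.
move=> hw.
have hy : in_dom f y by rewrite /in_dom fy ltry.
have [W fw] := dom_fin hpoly hw.
set c := (W - d * N1 (w - y) / 2)%R.
pose C := [set v | f v <= (c + d * N1 (v - y) / 2)%R%:E].
have wC : C w by rewrite /C /= fw lee_fin /c; lra.
have Cdom : forall v, C v -> in_dom f v by move=> v Cv; exact: le_lt_trans Cv (ltry _).
have Cbd : bounded_set C.
  case: hbd => M HM; exists `|M|%R; split; first exact: num_real.
  move=> M' MM' v /Cdom /HM hv.
  rewrite /= [leLHS]/Num.Def.normr /= mx_normrE; apply/bigmax_leP; split => [|[i l] _] /=.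
    exact: le_trans (normr_ge0 _) (ltW MM').
  rewrite (ord1 i); exact: le_trans (hv l) (le_trans (ler_norm M) (ltW MM')).
have Ccl : closed C.
  case: hpoly => _ [_ [m [A [a [b H]]]]].
  have -> : C = \bigcap_(k in [set: 'I_m]) [set v : 'rV[R]_n | (\sum_(l < n) A k l * v ord0 l + a k * (c + d * N1 (v - y) / 2) <= b k)%R].
    apply/seteqP; split => v /=.
      by move=> /H Hv k _; exact: Hv.
    by move=> Hv; apply/H => k; exact: Hv.
  apply: closed_bigI => k _.
  have gc : continuous (fun v : 'rV[R]_n => (\sum_(l < n) A k l * v ord0 l + a k * (c + d * N1 (v - y) / 2))%R).
    apply: contD.
      apply: cont_sum => l; apply: contMl; exact: coord_continuous.
    apply: contMl; apply: contD; first exact: cst_continuous.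
    apply: contMr; apply: contMl; exact: N1_cont.
  have := (continuous_closedP _).1 gc _ (@closed_le _ (b k)); exact.
have Ccomp : compact C := bounded_closed_compact Cbd Ccl.
have cN : {within C, continuous (fun v => N1 (v - y))}.
  by apply: continuous_subspaceT; exact: N1_cont.
have [v vC vmin] := @EVT_min_rV R n (fun v => N1 (v - y)) C (ex_intro _ w wC) Ccomp cN.
have vC' : C v by rewrite inE in vC.
have [vy|vny] := eqVneq v y.
  move: vC'; rewrite /C /= vy subrr N1_0 fy lee_fin mulr0 mul0r addr0 /c => h.
  rewrite fw lee_fin; lra.
exfalso.
have hv : in_dom f v := Cdom v vC'.
have [a ya] : exists a, (y ord0 a < v ord0 a)%R.
  case: (pselect (exists a, (y ord0 a < v ord0 a)%R)) => // hno.
  have [l vl] : exists l, v ord0 l != y ord0 l.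
    case: (pselect (exists l, v ord0 l != y ord0 l)) => // hne.
    exfalso; move/eqP: vny; apply; apply/rowP => l.
    apply/eqP; apply/negPn/negP => hl; apply: hne; exists l; exact: hl.
  have vl' : (v ord0 l < y ord0 l)%R.
    rewrite lt_neqAle vl /= leNgt; apply/negP => h; apply: hno; exists l; exact: h.
  have [j [yj _]] := hM hy hv vl'.
  exfalso; apply: hno; exists j; exact: yj.
have [b [vb [e0 e00 Hex]]] := hM hv hy ya.
set et := Num.min e0 (Num.min (v ord0 a - y ord0 a)%R (y ord0 b - v ord0 b)%R).
have et0 : (0 < et)%R by rewrite !lt_min e00 !subr_gt0 ya vb.
have ete0 : (et <= e0)%R by rewrite /et ge_min lexx.
have eta : (et <= v ord0 a - y ord0 a)%R by rewrite /et !ge_min lexx orbT.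
have etb : (et <= y ord0 b - v ord0 b)%R by rewrite /et !ge_min lexx !orbT.
have ab : a != b by apply/eqP => abe; move: ya vb; rewrite abe; lra.
have hex : _ := Hex et (introT andP (conj (ltW et0) ete0)).
have hl := line_bound a b et0.
set v' := (v - et *: (chi R a - chi R b))%R.
have Nv' : N1 (v' - y) = (N1 (v - y) - 2 * et)%R.
  rewrite (_ : (v' - y = (v - y) - et *: (chi R a - chi R b))%R); last first.
    by rewrite /v' addrAC.
  apply: N1_step => //; first exact: ltW.
    by rewrite !mxE.
  by rewrite !mxE opprB.
have [V fv] := dom_fin hpoly hv.
have fyne := f_neq_ninfty hpoly (y + et *: (chi R a - chi R b))%R.
have [[V' fv']|fv'] := fcases hpoly v'; last first.
  move: hex; rewrite -/v' fv' addye // fv fy -EFinD leye_eq; done.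
have [[P fP]|fP] := fcases hpoly (y + et *: (chi R a - chi R b))%R; last first.
  move: hex; rewrite -/v' fP fv' addey // fv fy -EFinD leye_eq; done.
move: hex hl vC'; rewrite -/v' fP fv' fv fy /C /= fv -!EFinD !lee_fin => hex hl hvC.
have v'C : C v' by rewrite /C /= fv' lee_fin Nv'; lra.
have := vmin v' (mem_set v'C); rewrite Nv'; lra.
Qed.

End Main.

Local Open Scope ereal_scope.

Lemma N1_bound (R : realType) n (lam eps : R) (p q : 'rV[R]_n) :
  (0 <= lam)%R -> (0 <= eps)%R -> (N1 p <= 2)%R -> (N1 q <= 2)%R ->
  (N1 (lam *: p + eps *: q) <= 2 * lam + 2 * eps)%R.
Proof.
move=> l0 e0 hp hq.
apply: le_trans (N1D _ _) _; rewrite !N1Z !ger0_norm //.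
have := ler_wpM2l l0 hp; have := ler_wpM2l e0 hq; lra.
Qed.

Unset Implicit Arguments.
Unset Strict Implicit.

Theorem mainTheorem14 (R : realType) (n : nat) (f : 'rV[R]_n -> \bar R)
  (hpoly : polyhedral_convex f) (hM : M_convex f) (hbd : bounded_dom f)
  (y : 'rV[R]_n) (hy : in_dom f y) (hneg : phiR f y < 0)
  (i j : 'I_n) (hij : i != j) (hsteep : fder f y i j = phiR f y)
  (lam : R) (hlam : (0 < lam)%R)
  (hstep : f (y + lam *: (chi R i - chi R j))%R - f y = lam%:E * phiR f y) :
  let yh := (y + lam *: (chi R i - chi R j))%R in
  phiR f y <= phiR f yh /\
  (forall h k : 'I_n, h != k ->
     phiR f y <= fder f yh h k /\
     (fder f yh h k = phiR f y ->
        fder f yh h k = phiR f yh /\ k != i /\ h != j)).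
Proof.
move=> yh.
have [Y fy] := dom_fin hpoly hy.
rewrite -/yh in hstep.
have [d hd] : exists d, phiR f y = d%:E.
  move: hneg hstep; case: (phiR f y) => [d _ _| //| _]; first by exists d.
  rewrite fy gt0_muleNy ?lte_fin //.
  have [[F ->]|->] := fcases hpoly yh; first by rewrite -EFinB.
  by rewrite addye.
have d0 : (d < 0)%R by rewrite hd lte_fin in hneg.
have fyh : f yh = (Y + lam * d)%R%:E.
  move: hstep; rewrite hd fy.
  have [[F ->]|->] := fcases hpoly yh; last by rewrite addye.
  by rewrite -EFinB -EFinM => -[<-]; congr (_%:E); ring.
have G0 := G hpoly hM hbd fy hd.
have hz : forall h k (eps : R), (yh + eps *: (chi R h - chi R k) - y =
    lam *: (chi R i - chi R j) + eps *: (chi R h - chi R k))%R.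
  by move=> h k eps; apply/rowP => l; rewrite /yh !mxE; ring.
have K : forall h k (eps B : R), (0 < eps)%R ->
    (N1 (yh + eps *: (chi R h - chi R k) - y) <= 2 * B)%R ->
    (Y + d * B)%R%:E <= f (yh + eps *: (chi R h - chi R k))%R.
  move=> h k eps B e0 hN.
  have [[Z fZ]|->] := fcases hpoly (yh + eps *: (chi R h - chi R k))%R; last by rewrite leey.
  have := G0 (yh + eps *: (chi R h - chi R k))%R; rewrite /in_dom fZ ltry => /(_ isT).
  rewrite !lee_fin => hG.
  have : (d * B <= d * N1 (yh + eps *: (chi R h - chi R k) - y) / 2)%R.
    have hN' : (N1 (yh + eps *: (chi R h - chi R k) - y) / 2 <= B)%R by lra.
    rewrite -mulrA; apply: ler_wnM2l; [exact: ltW d0 | exact: hN'].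
  lra.
have K1 : forall h k (eps : R), (0 < eps)%R -> d%:E <= qt f yh (chi R h - chi R k) eps.
  move=> h k eps e0; rewrite /qt fyh.
  have hN : (N1 (yh + eps *: (chi R h - chi R k) - y) <= 2 * (lam + eps))%R.
    rewrite hz mulrDr; apply: N1_bound; [exact: ltW | exact: ltW | exact: N1_chi | exact: N1_chi].
  have := K h k eps (lam + eps)%R e0 hN.
  have [[Z ->]|->] := fcases hpoly (yh + eps *: (chi R h - chi R k))%R; last first.
    by move=> _; rewrite addye // gt0_mulye ?leey // lte_fin invr_gt0.
  rewrite -EFinB -EFinM !lee_fin => hZ.
  rewrite ler_pdivlMr //; lra.
have K2 : forall h k (eps : R), (0 < eps)%R -> (eps <= lam)%R -> (k = i \/ h = j) ->
    0%R%:E <= qt f yh (chi R h - chi R k) eps.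
  move=> h k eps e0 el hkh; rewrite /qt fyh.
  have hN : (N1 (yh + eps *: (chi R h - chi R k) - y) <= 2 * lam)%R.
    case: hkh => [ki|hj].
    - rewrite hz ki (_ : (lam *: (chi R i - chi R j) + eps *: (chi R h - chi R i) =
          (lam - eps) *: (chi R i - chi R j) + eps *: (chi R h - chi R j))%R); last first.
        by apply/rowP => l; rewrite !mxE; ring.
      rewrite (_ : (2 * lam = 2 * (lam - eps) + 2 * eps)%R); last by ring.
      apply: N1_bound; [rewrite subr_ge0 | exact: ltW | exact: N1_chi | exact: N1_chi] => //.
    - rewrite hz hj (_ : (lam *: (chi R i - chi R j) + eps *: (chi R j - chi R k) =
          (lam - eps) *: (chi R i - chi R j) + eps *: (chi R i - chi R k))%R); last first.
        by apply/rowP => l; rewrite !mxE; ring.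
      rewrite (_ : (2 * lam = 2 * (lam - eps) + 2 * eps)%R); last by ring.
      apply: N1_bound; [rewrite subr_ge0 | exact: ltW | exact: N1_chi | exact: N1_chi] => //.
  have := K h k eps lam e0 hN.
  have [[Z ->]|->] := fcases hpoly (yh + eps *: (chi R h - chi R k))%R; last first.
    by move=> _; rewrite addye // gt0_mulye ?leey // lte_fin invr_gt0.
  rewrite -EFinB -EFinM !lee_fin => hZ.
  rewrite ler_pdivlMr //; lra.
have FD : forall h k, d%:E <= fder f yh h k.
  move=> h k; apply: (fder_ge (a:=h) (b:=k) hpoly fyh (ltr01 : (0 < 1 :> R)%R)) => al al0 _.
  exact: K1.
have P1 : phiR f y <= phiR f yh.
  rewrite hd /phiR; apply: (big_ind (fun z => d%:E <= z)) => [|x1 x2 h1 h2|h _].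
  - exact: leey.
  - by rewrite le_min h1 h2.
  apply: (big_ind (fun z => d%:E <= z)) => [|x1 x2 h1 h2|k _].
  - exact: leey.
  - by rewrite le_min h1 h2.
  exact: FD.
split => // h k hk; split; first by rewrite hd; exact: FD.
move=> heq.
split; first by apply/le_anti; rewrite phi_le /= heq P1.
have F0 : (k = i \/ h = j) -> 0%R%:E <= fder f yh h k.
  move=> hkh; apply: (fder_ge (a:=h) (b:=k) hpoly fyh hlam) => al al0 all.
  exact: K2.
split; apply/eqP => e.
- have := F0 (or_introl e); rewrite heq hd lee_fin; lra.
- have := F0 (or_intror e); rewrite heq hd lee_fin; lra.
Qed.
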